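(* Any instance of \textsc{Virtual Edge Steiner Tree} with $k$ terminals and $\ell$ virtual edges can be reduced to $4^{\ell}$ instances of \textsc{Steiner Tree}, each with at most $k+2\ell$ terminals; that is, the minimum total cost of the \textsc{Virtual Edge Steiner Tree} instance is obtained as the minimum, over these $4^\ell$ instances, of the optimum of the \textsc{Steiner Tree} instance plus the corresponding virtual edge weights.
   Context: \textsc{Steiner Tree}: given a graph with nonnegative edge weights and a terminal set $T$, find a minimum-weight edge set connecting all terminals. \textsc{Virtual Edge Steiner Tree}: the input is a graph $G=(V,E)$ (parallel edges allowed, no loops) with weights $w_e\in\mathbb{R}_{\ge0}$ for $e\in E$, a set of terminals $T\subseteq V$, and a set $E^*$ of ``virtual edges'' (pairs $\{u,v\}$ of vertices, with $E\cap E^*=\emptyset$), each virtual edge $e^*=\{u,v\}$ having a weight function $w_{e^*}:\{u,v,\mathsf{d},\mathsf{c}\}\to\mathbb{R}_{\ge0}$. A solution is a set $S\subseteq E\cup E^*$ forming a tree (Steiner tree) with $T\subseteq V(S)$ and $V(S)\cap e^*\neq\emptyset$ for each $e^*\in E^*$, where $V(S)$ is the set of vertices covered by $S$. The cost $c_{e^*}(S)$ of $e^*=\{u,v\}$ is $w_{e^*}(u)$ if $u\in V(S),v\notin V(S)$; $w_{e^*}(v)$ if $v\in V(S),u\notin V(S)$; $w_{e^*}(\mathsf{c})$ if $e^*\in S$; and $w_{e^*}(\mathsf{d})$ if $u,v\in V(S)$ and $e^*\notin S$. The total cost is $c(S)=\sum_{e\in S\cap E}w_e+\sum_{e^*\in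 E^*}c_{e^*}(S)$, to be minimized. *)

(* Defs.v *)
From HB Require Import structures.
From mathcomp Require Import all_boot all_order all_algebra.
Set Implicit Arguments. Unset Strict Implicit. Unset Printing Implicit Defensive.
Import Order.TTheory GRing.Theory Num.Theory.
Local Open Scope ring_scope.

(* The four possible "states" of a virtual edge e* = {u,v} with u = first
   component, v = second component of its endpoint pair:
   VU : u in V(S), v notin V(S)   (cost w_{e*}(u))
   VV : v in V(S), u notin V(S)   (cost w_{e*}(v))
   VD : u,v in V(S), e* notin S   (cost w_{e*}(d))
   VC : e* in S                   (cost w_{e*}(c)) *)
Inductive vstate := VU | VV | VD | VC.

Definition vstate_to (s : vstate) : 'I_4 :=
  match s with VU => inord 0 | VV => inord 1 | VD => inord 2 | VC => inord 3 end.
Definition vstate_from (i : 'I_4) : vstate :=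
  match val i with 0 => VU | 1 => VV | 2 => VD | _ => VC end.
Lemma vstate_toK : cancel vstate_to vstate_from.
Proof. by case; rewrite /vstate_from /= inordK. Qed.
HB.instance Definition _ := Finite.copy vstate (can_type vstate_toK).

Definition is_min (R : realFieldType) (P : R -> Prop) (x : R) :=
  P x /\ forall y, P y -> x <= y.

Section Graphs.
Variables (V X : finType) (ends : X -> V * V).

Definition adj (F : {set X}) : rel V :=
  fun x y => [exists e in F, (ends e == (x, y)) || (ends e == (y, x))].

Definition acyclic (F : {set X}) :=
  forall e, e \in F -> ~~ connect (adj (F :\ e)) (ends e).1 (ends e).2.

(* (W, F) is a tree (the empty graph is allowed) *)
Definition is_tree (W : {set V}) (F : {set X}) :=
  [/\ forall e, e \in F -> ((ends e).1 \in W) && ((ends e).2 \in W),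
      forall x y, x \in W -> y \in W -> connect (adj F) x y
    & acyclic F].
End Graphs.

Section Steiner.
Variables (R : realFieldType) (V E : finType) (ends : E -> V * V) (w : E -> R)
          (A : {set E}) (Tm : {set V}).
Definition steiner_feasible (F : {set E}) :=
  F \subset A /\ forall t1 t2, t1 \in Tm -> t2 \in Tm -> connect (adj ends F) t1 t2.
Definition steiner_opt (x : R) :=
  is_min (fun y => exists F, steiner_feasible F /\ y = \sum_(e in F) w e) x.
End Steiner.

Section VEST.
Variables (R : realFieldType) (V E Es : finType) (ends : E -> V * V) (w : E -> R)
          (T : {set V}) (vends : Es -> V * V) (vw : Es -> vstate -> R).

Definition allends (x : E + Es) : V * V :=
  match x with inl e => ends e | inr f => vends f end.

Definition vstate_in (W : {set V}) (S : {set E + Es}) (f : Es) : vstate :=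
  if inr f \in S then VC
  else if (vends f).1 \in W then (if (vends f).2 \in W then VD else VU)
  else VV.

Definition vest_feasible (W : {set V}) (S : {set E + Es}) :=
  [/\ is_tree allends W S, T \subset W
    & forall f, ((vends f).1 \in W) || ((vends f).2 \in W)].

Definition vest_cost (W : {set V}) (S : {set E + Es}) : R :=
  \sum_(e : E | inl e \in S) w e + \sum_(f : Es) vw f (vstate_in W S f).

Definition vest_opt (x : R) :=
  is_min (fun y => exists W S, vest_feasible W S /\ y = vest_cost W S) x.

Definition in1 (s : vstate) := s != VV.
Definition in2 (s : vstate) := s != VU.

(* vertices forced outside V(S): they are deleted *)
Definition deleted (g : {ffun Es -> vstate}) : {set V} :=
  [set v | [exists f, ((g f == VU) && (v == (vends f).2))
                   || ((g f == VV) && (v == (vends f).1))]].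

(* vertices forced inside V(S): they become terminals *)
Definition required (g : {ffun Es -> vstate}) : {set V} :=
  T :|: [set v | [exists f, (in1 (g f) && (v == (vends f).1))
                         || (in2 (g f) && (v == (vends f).2))]].

(* virtual edges guessed to be in S: they are contracted *)
Definition cedges (g : {ffun Es -> vstate}) : {set Es} := [set f | g f == VC].
Definition crep (g : {ffun Es -> vstate}) : V -> V := fingraph.root (adj vends (cedges g)).

(* the Steiner Tree instance: graph G - deleted vertices, with the guessed
   virtual edges contracted (vertices replaced by class representatives) *)
Definition red_ends (g : {ffun Es -> vstate}) (e : E) : V * V :=
  (crep g (ends e).1, crep g (ends e).2).
Definition red_edges (g : {ffun Es -> vstate}) : {set E} :=
  [set e | ((ends e).1 \notin deleted g) && ((ends e).2 \notin deleted g)].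
Definition red_terms (g : {ffun Es -> vstate}) : {set V} := crep g @: required g.

(* guesses that are self-contradictory are discarded *)
Definition guess_valid (g : {ffun Es -> vstate}) :=
  acyclic vends (cedges g) /\ [disjoint deleted g & required g].

Definition guess_weight (g : {ffun Es -> vstate}) : R := \sum_(f : Es) vw f (g f).
End VEST.

(* Main.v *)
Require Import Defs.
From HB Require Import structures.
From mathcomp Require Import all_boot all_order all_algebra.
Import Order.TTheory GRing.Theory Num.Theory.

Module Helpers.
Set Implicit Arguments. Unset Strict Implicit. Unset Printing Implicit Defensive.

Section G.
Variables (V X : finType) (ends : X -> V * V).

Lemma adjC (F : {set X}) x y : adj ends F x y = adj ends F y x.
Proof. by apply: eq_existsb => e; rewrite orbC. Qed.

Lemma adj_sym (F : {set X}) : connect_sym (adj ends F).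
Proof. by apply: sym_connect_sym => x y; rewrite adjC. Qed.

Lemma adj_sub (F1 F2 : {set X}) x y : F1 \subset F2 -> adj ends F1 x y -> adj ends F2 x y.
Proof.
move=> sF /existsP[e /andP[eF He]]; apply/existsP; exists e.
by rewrite (subsetP sF) // He.
Qed.

Lemma connect_mono (F1 F2 : {set X}) x y :
  F1 \subset F2 -> connect (adj ends F1) x y -> connect (adj ends F2) x y.
Proof.
move=> sF; apply: connect_sub => a b H; apply: connect1; exact: adj_sub H.
Qed.

Lemma adj_ends (F : {set X}) e : e \in F -> adj ends F (ends e).1 (ends e).2.
Proof. by move=> eF; apply/existsP; exists e; rewrite eF -surjective_pairing eqxx. Qed.

Lemma adj_ends' (F : {set X}) e : e \in F -> adj ends F (ends e).2 (ends e).1.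
Proof. by move=> eF; rewrite adjC; apply: adj_ends. Qed.

Lemma adj_split (F : {set X}) e x z :
  adj ends F x z -> adj ends (F :\ e) x z \/ (ends e = (x, z) \/ ends e = (z, x)).
Proof.
move=> /existsP[e' /andP[e'F He']].
case: (eqVneq e' e) => [<- | ne].
  by right; case/orP: He' => /eqP ->; [left|right].
by left; apply/existsP; exists e'; rewrite !inE ne e'F He'.
Qed.

Lemma decomp (G : {set X}) e x y :
  connect (adj ends G) x y ->
  connect (adj ends (G :\ e)) x y \/
  ((connect (adj ends (G :\ e)) x (ends e).1 \/ connect (adj ends (G :\ e)) x (ends e).2)
   /\ (connect (adj ends (G :\ e)) (ends e).1 y \/ connect (adj ends (G :\ e)) (ends e).2 y)).
Proof.
move=> /connectP[p Hp ->]; elim: p x Hp => [|z p IH] x /=.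
  by move=> _; left.
move=> /andP[Hxz /IH {}IH].
case: (adj_split e Hxz) => [Hxz' | Hee].
  case: IH => [Hl | [Hl Hr]].
    by left; apply: connect_trans (connect1 Hxz') Hl.
  right; split => //.
  by case: Hl => H; [left|right]; apply: connect_trans (connect1 Hxz') H.
right; split.
  by case: Hee => ->; [left|right]; apply: connect0.
case: IH => [Hl | [_ Hr]] //.
by case: Hee => ->; [right|left].
Qed.

Lemma conn_closed (F : {set X}) (P : V -> bool) x y :
  (forall a b, adj ends F a b -> P b) -> P x -> connect (adj ends F) x y -> P y.
Proof.
move=> HP Px /connectP[p Hp ->]; elim: p x Px Hp => [|z p IH] x //= Px /andP[Hxz Hp].
exact: IH (HP _ _ Hxz) Hp.
Qed.

Lemma nonbridge (A B : {set X}) f :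
  f \in A -> f \notin B ->
  ~~ connect (adj ends (A :\ f)) (ends f).1 (ends f).2 ->
  connect (adj ends ((A :|: B) :\ f)) (ends f).1 (ends f).2 ->
  exists2 e, e \in B & connect (adj ends ((A :|: B) :\ e)) (ends e).1 (ends e).2.
Proof.
move=> fA; move: {2}#|B| (leqnn #|B|) => n; elim: n B => [|n IH] B.
  rewrite leqn0 cards_eq0 => /eqP -> _ Hac; by rewrite setU0 (negbTE Hac).
move=> HB fB Hac Hc.
case: (set_0Vmem B) => [B0 | [e eB]].
  by move: Hc; rewrite B0 setU0 (negbTE Hac).
have fe : f != e by apply: contraNneq fB => ->.
have HB' : #|B :\ e| <= n by rewrite (cardsD1 e B) eB in HB.
have fB' : f \notin B :\ e by rewrite !inE negb_and fB orbT.
have sub1 : ((A :|: B) :\ f) :\ e \subset (A :|: B :\ e) :\ f.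
  by apply/subsetP => z; rewrite !inE; case: (z == e); case: (z == f) => //=.
have mono e' : (A :|: B :\ e) :\ e' \subset (A :|: B) :\ e'.
  by apply/subsetP => z; rewrite !inE; case: (z == e'); case: (z \in A) => //= /andP[].
have useIH : connect (adj ends ((A :|: B :\ e) :\ f)) (ends f).1 (ends f).2 ->
   exists2 e0, e0 \in B & connect (adj ends ((A :|: B) :\ e0)) (ends e0).1 (ends e0).2.
  move=> H; case: (IH _ HB' fB' Hac H) => e0 e0B He0.
  exists e0; first by move: e0B; rewrite !inE => /andP[].
  exact: connect_mono (mono e0) He0.
case: (decomp e Hc) => [Hl | [Hl Hr]].
  by apply: useIH; exact: connect_mono sub1 Hl.
have s2 : ((A :|: B) :\ f) :\ e \subset (A :|: B) :\ e.
  by apply/subsetP => z; rewrite !inE => /and3P[-> _ ->].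
have fin : f \in (A :|: B) :\ e by rewrite !inE fe fA.
have Hf := adj_ends fin.
set G := (A :|: B) :\ e.
have K p q : connect (adj ends (((A :|: B) :\ f) :\ e)) (ends f).1 p ->
             connect (adj ends (((A :|: B) :\ f) :\ e)) q (ends f).2 ->
             connect (adj ends G) p q.
  move=> H1 H2.
  have H1' : connect (adj ends G) p (ends f).1 by rewrite adj_sym; exact: connect_mono s2 H1.
  have H2' : connect (adj ends G) (ends f).2 q by rewrite adj_sym; exact: connect_mono s2 H2.
  exact: connect_trans H1' (connect_trans (connect1 Hf) H2').
case: Hl => H1; case: Hr => H2.
- by apply: useIH; apply: connect_mono sub1 (connect_trans H1 H2).
- by exists e => //; apply: K H1 H2.
- by exists e => //; rewrite adj_sym; apply: K H1 H2.
- by apply: useIH; apply: connect_mono sub1 (connect_trans H1 H2).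
Qed.
End G.

Lemma card_vstate : #|{: vstate}| = 4.
Proof.
rewrite (bij_eq_card (f := vstate_to)) ?card_ord //.
exists vstate_from; first exact: vstate_toK.
move=> [[|[|[|[|n]]]] Hi]; apply: val_inj; rewrite /= inordK //.
Qed.

Lemma part1 (Es : finType) : #|{ffun Es -> vstate}| = 4 ^ #|Es|.
Proof. by rewrite card_ffun card_vstate. Qed.

Lemma part2 (V Es : finType) (T : {set V}) (vends : Es -> V * V) g :
  #|red_terms T vends g| <= #|T| + 2 * #|Es|.
Proof.
apply: leq_trans (leq_imset_card _ _) _.
rewrite /required; apply: leq_trans (leq_card_setU _ _).1 _.
rewrite leq_add2l.
set X := [set v | _].
have sX : X \subset ((fun f => (vends f).1) @: setT) :|: ((fun f => (vends f).2) @: setT).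
  apply/subsetP => v; rewrite inE => /existsP[f /orP[] /andP[_ /eqP ->]]; rewrite inE; apply/orP.
    by left; apply/imsetP; exists f.
  by right; apply/imsetP; exists f.
apply: leq_trans (subset_leq_card sX) _.
apply: leq_trans (leq_card_setU _ _).1 _.
rewrite mul2n -addnn leq_add //; apply: leq_trans (leq_imset_card _ _) _; exact: max_card.
Qed.

Lemma conn_map (V V' : finType) (h : V -> V') (e : rel V) (e' : rel V') x y :
  (forall a b, e a b -> connect e' (h a) (h b)) -> connect e x y -> connect e' (h x) (h y).
Proof.
move=> He /connectP[p Hp ->]; elim: p x Hp => [|z p IH] x /=; first by rewrite connect0.
by move=> /andP[Hxz Hp]; apply: connect_trans (He _ _ Hxz) (IH _ Hp).
Qed.

Definition veqb (a b : vstate) : bool :=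
  match a, b with VU,VU | VV,VV | VD,VD | VC,VC => true | _,_ => false end.
Lemma eq_vs a b : (a == b) = veqb a b.
Proof. by apply/eqP/idP; case: a; case: b. Qed.

Section Main.
Variables (R : realFieldType) (V E Es : finType) (ends : E -> V * V) (w : E -> R)
          (T : {set V}) (vends : Es -> V * V) (vw : Es -> vstate -> R).
Local Open Scope ring_scope.
Hypothesis w_ge0 : forall e, 0 <= w e.
Hypothesis vw_ge0 : forall f s, 0 <= vw f s.

Notation allends := (allends ends vends).

Lemma adj_inr (C : {set Es}) (S : {set E + Es}) x y :
  (forall f, f \in C -> inr f \in S) ->
  connect (adj vends C) x y -> connect (adj allends S) x y.
Proof.
move=> HC; apply: connect_sub => a b /existsP[f /andP[fC Hf]]; apply: connect1.
by apply/existsP; exists (inr f); rewrite HC.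
Qed.

Lemma adj_inr' (C : {set Es}) f x y :
  connect (adj allends ((inr @: C) :\ inr f)) x y -> connect (adj vends (C :\ f)) x y.
Proof.
apply: connect_sub => a b /existsP[z /andP[]]; rewrite !inE => /andP[zf /imsetP[f' f'C Ez]] Hz.
subst z.
apply: connect1; apply/existsP; exists f'; rewrite !inE f'C andbT.
by apply/andP; split => //; apply: contraNneq zf => ->.
Qed.

Section G.
Variable g : {ffun Es -> vstate}.
Notation req := (required T vends g).
Notation del := (deleted vends g).
Notation C := (cedges g).
Notation crep := (crep vends g).

Lemma crep_eq a b : crep a = crep b -> connect (adj vends C) a b.
Proof. by move=> H; rewrite -(root_connect (adj_sym _ _)) /crep in H *; rewrite H. Qed.

Lemma crep_conn a b : connect (adj vends C) a b -> crep a = crep b.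
Proof. by rewrite -(root_connect (adj_sym _ _)) => /eqP. Qed.

Lemma req1 f : in1 (g f) -> (vends f).1 \in req.
Proof. by move=> H; rewrite !inE; apply/orP; right; apply/existsP; exists f; rewrite H eqxx ?orbT. Qed.
Lemma req2 f : in2 (g f) -> (vends f).2 \in req.
Proof. by move=> H; rewrite !inE; apply/orP; right; apply/existsP; exists f; rewrite H eqxx ?orbT. Qed.
Lemma del1 f : g f = VV -> (vends f).1 \in del.
Proof. by move=> H; rewrite !inE; apply/existsP; exists f; rewrite H !eqxx ?andbT ?orbT. Qed.
Lemma del2 f : g f = VU -> (vends f).2 \in del.
Proof. by move=> H; rewrite !inE; apply/existsP; exists f; rewrite H !eqxx ?andbT ?orbT. Qed.

Lemma inC f : (f \in C) = (g f == VC).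
Proof. by rewrite inE. Qed.

End G.

Lemma factA W S : vest_feasible ends T vends W S ->
  exists g, guess_valid T vends g /\
   exists F, steiner_feasible (red_ends ends vends g) (red_edges ends vends g) (red_terms T vends g) F
     /\ \sum_(e in F) w e + guess_weight vw g = vest_cost w vends vw W S.
Proof.
move=> [[Hends Hconn Hacyc] TW Hvf].
pose g := [ffun f => vstate_in vends W S f].
have gE f : g f = vstate_in vends W S f by rewrite ffunE.
have CE f : (f \in cedges g) = (inr f \in S).
  by rewrite inE gE /vstate_in; (repeat case: ifP => _); rewrite ?eq_vs.
have reqW v : v \in required T vends g -> v \in W.
  rewrite !inE => /orP[/(subsetP TW) // | /existsP[f /orP[]/andP[H /eqP ->]]].
    move: H; rewrite gE /vstate_in; case: ifP => [fS _ | _].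
      by move: (Hends _ fS) => /andP[].
    by (repeat case: ifP => //); rewrite /in1 /in2 ?eq_vs.
  move: H; rewrite gE /vstate_in; case: ifP => [fS _ | _].
    by move: (Hends _ fS) => /andP[].
  by move: (Hvf f); (repeat case: ifP => //); rewrite /in1 /in2 ?eq_vs /=.
have delW v : v \in deleted vends g -> v \notin W.
  rewrite inE => /existsP[f /orP[]/andP[/eqP H /eqP ->]]; move: H; rewrite gE /vstate_in;
    case: ifP => // _; case: ifP => // _; case: ifP => //.
exists g; split.
  split.
    move=> f fC; apply/negP => Hc; have := Hacyc (inr f); rewrite -CE fC => /(_ isT)/negP; apply.
    apply: adj_inr Hc => f'; rewrite !inE => /andP[f'f f'C]; rewrite -CE inE f'C andbT.
    by apply: contra f'f => /eqP [->].
  rewrite disjoint_subset; apply/subsetP => v /delW vW; rewrite inE /=.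
  exact: contra (reqW v) vW.
exists [set e | inl e \in S]; split.
  split.
    apply/subsetP => e; rewrite inE => eS; rewrite [_ \in red_edges _ _ _]inE; have /andP[h1 h2] := Hends _ eS.
    by apply/andP; split; apply/negP => /delW /negP; apply.
  move=> t1 t2 /imsetP[x xr ->] /imsetP[y yr ->].
  have := Hconn x y (reqW _ xr) (reqW _ yr).
  apply: conn_map => a b /existsP[z /andP[zS Hz]].
  case: z zS Hz => [e|f] zS /orP[]/eqP Hz.
  - apply: connect1; apply/existsP; exists e; rewrite inE zS /red_ends /=.
    by rewrite /= in Hz; rewrite Hz eqxx.
  - apply: connect1; apply/existsP; exists e; rewrite inE zS /red_ends /=.
    by rewrite /= in Hz; rewrite Hz eqxx orbT.
  - rewrite (@crep_conn g a b) //; apply: connect1; apply/existsP; exists f.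
    by rewrite /= in Hz; rewrite CE zS Hz eqxx.
  - rewrite (@crep_conn g a b) //; apply: connect1; apply/existsP; exists f.
    by rewrite /= in Hz; rewrite CE zS Hz eqxx orbT.
rewrite /vest_cost /guess_weight; congr (_ + _).
  by apply: eq_bigl => e; rewrite inE.
by apply: eq_bigr => f _; rewrite gE.
Qed.

Lemma factB g F : guess_valid T vends g ->
  steiner_feasible (red_ends ends vends g) (red_edges ends vends g) (red_terms T vends g) F ->
  exists W S, vest_feasible ends T vends W S /\
    vest_cost w vends vw W S <= \sum_(e in F) w e + guess_weight vw g.
Proof.
move=> [Hac Hdis] [sF Hterm].
set C := cedges g; set req := required T vends g.
have inl_inj : injective (@inl E Es) by move=> x y [].
have inr_inj : injective (@inr E Es) by move=> x y [].
pose SB (B : {set E}) : {set E + Es} := inr @: C :|: inl @: B.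
have SBl B e : (inl e \in SB B) = (e \in B).
  rewrite inE (mem_imset _ _ inl_inj); case: imsetP => // -[f _ //].
have SBr B f : (inr f \in SB B) = (f \in C).
  rewrite inE (mem_imset _ _ inr_inj); case: (f \in C) => //=; case: imsetP => // -[e _ //].
pose Q B := [forall x in req, forall y in req, connect (adj allends (SB B)) x y].
have QF : Q F.
  apply/forallP => x; apply/implyP => xr; apply/forallP => y; apply/implyP => yr.
  have := Hterm _ _ (imset_f (crep vends g) xr) (imset_f (crep vends g) yr).
  move=> /connectP[p Hp Hl].
  have lift : forall z0, connect (adj allends (SB F)) x z0 ->
      path (adj (red_ends ends vends g) F) (crep vends g z0) p ->
      exists2 z1, crep vends g z1 = last (crep vends g z0) p & connect (adj allends (SB F)) x z1.
    elim: p {Hp Hl} => [|z p IH] z0 Hx0 /=; first by exists z0.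
    move=> /andP[/existsP[e /andP[eF He]] Hp].
    have eS : inl e \in SB F by rewrite SBl.
    have Cto a b : connect (adj vends C) a b -> connect (adj allends (SB F)) a b.
      by apply: adj_inr => f fC; rewrite SBr.
    case/orP: He => /eqP [E1 E2].
      rewrite -E2 in Hp *; apply: (IH (ends e).2) Hp.
      apply: connect_trans Hx0 (connect_trans (Cto _ _ (crep_eq (esym E1))) _).
      exact: connect1 (@adj_ends _ _ allends _ _ eS).
    rewrite -E1 in Hp *; apply: (IH (ends e).1) Hp.
    apply: connect_trans Hx0 (connect_trans (Cto _ _ (crep_eq (esym E2))) _).
    exact: connect1 (@adj_ends' _ _ allends _ _ eS).
  have [z1 Hz1 Hx1] := lift x (connect0 _ _) Hp.
  have Hc : connect (adj vends C) z1 y by apply: crep_eq; rewrite Hz1 Hl.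
  by apply: connect_trans Hx1 (adj_inr _ Hc) => f fC; rewrite SBr.
case: (@arg_minnP _ F (fun B : {set E} => (B \subset F) && Q B) (fun B => #|B|)).
  by rewrite subxx QF.
move=> B /andP[sBF QB] Hmin.
have rm e0 : e0 \in B -> Q (B :\ e0) -> False.
  move=> e0B HQ; have := Hmin (B :\ e0); rewrite HQ (subset_trans (subD1set B e0) sBF) => /(_ isT).
  by rewrite (cardsD1 e0 B) e0B add1n ltnn.
have SBD e0 : SB (B :\ e0) = SB B :\ inl e0.
  apply/setP => -[e|f]; rewrite in_setD1 ?SBl ?SBr ?in_setD1 //.
have QBxy x y : x \in req -> y \in req -> connect (adj allends (SB B)) x y.
  by move=> xr yr; move/forallP: QB => /(_ x); rewrite xr => /forallP /(_ y); rewrite yr.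
have Qintro B' : (forall x y, x \in req -> y \in req -> connect (adj allends (SB B')) x y) -> Q B'.
  move=> H; apply/forallP => x; apply/implyP => xr; apply/forallP => y; apply/implyP => yr.
  exact: H.
have e0S e0 : e0 \in B -> inl e0 \in SB B by rewrite SBl.
have nbl e0 : e0 \in B -> connect (adj allends (SB B :\ inl e0)) (ends e0).1 (ends e0).2 -> False.
  move=> e0B Hc; apply: (rm e0 e0B); apply: Qintro => x y xr yr; rewrite SBD.
  have Hc' : connect (adj allends (SB B :\ inl e0)) (ends e0).2 (ends e0).1 by rewrite adj_sym.
  case: (decomp (inl e0) (QBxy x y xr yr)) => [//| /= [[H1|H1] [H2|H2]]].
  - exact: connect_trans H1 H2.
  - exact: connect_trans H1 (connect_trans Hc H2).
  - exact: connect_trans H1 (connect_trans Hc' H2).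
  - exact: connect_trans H1 H2.
have reach e0 : e0 \in B -> [exists r in req, connect (adj allends (SB B)) r (ends e0).1].
  move=> e0B; apply: contraT => Hn; exfalso; apply: (rm e0 e0B); apply: Qintro => x y xr yr; rewrite SBD.
  case: (decomp (inl e0) (QBxy x y xr yr)) => [//| /= [H1 _]].
  exfalso; move/negP: Hn; apply; apply/existsP; exists x; rewrite xr /=.
  have sub : SB B :\ inl e0 \subset SB B by apply: subD1set.
  case: H1 => H1; first exact: connect_mono sub H1.
  exact: connect_trans (connect_mono sub H1) (connect1 (@adj_ends' _ _ allends _ _ (e0S _ e0B))).
set S := SB B.
pose W := [set v | [exists r in req, connect (adj allends S) r v]].
have reqW v : v \in req -> v \in W by move=> vr; rewrite inE; apply/existsP; exists v; rewrite vr connect0.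
have Creq f : f \in C -> ((vends f).1 \in req) && ((vends f).2 \in req).
  by rewrite inC => /eqP Hf; rewrite req1 ?req2 // /in1 /in2 Hf eq_vs.
have Wdel v : v \in W -> v \notin deleted vends g.
  rewrite inE => /existsP[r /andP[rr Hr]].
  apply: (conn_closed (P := fun v => v \notin deleted vends g)) Hr; last first.
    by rewrite (disjointFl Hdis rr).
  move=> a b /existsP[[e|f] /andP[zS /orP[]/eqP Hz]] /=; rewrite /= in Hz.
  - rewrite SBl in zS; move: (subsetP sF _ (subsetP sBF _ zS)); rewrite inE Hz.
    by case/andP.
  - rewrite SBl in zS; move: (subsetP sF _ (subsetP sBF _ zS)); rewrite inE Hz.
    by case/andP.
  - rewrite SBr in zS; move/Creq: zS; rewrite Hz /= => /andP[_ h].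
    by rewrite (disjointFl Hdis h).
  - rewrite SBr in zS; move/Creq: zS; rewrite Hz /= => /andP[h _].
    by rewrite (disjointFl Hdis h).
have delW v : v \in deleted vends g -> v \notin W.
  by move=> H; apply/negP => /Wdel; rewrite H.
have Hst f : vstate_in vends W S f = g f.
  rewrite /vstate_in SBr inC; case Ef: (g f); rewrite eq_vs /=.
  - rewrite reqW ?req1 /in1 ?Ef ?eq_vs //; case: ifP => // h; by move: (delW _ (del2 Ef)); rewrite h.
  - case: ifP => // h; by move: (delW _ (del1 Ef)); rewrite h.
  - by rewrite !reqW // ?req1 ?req2 // /in1 /in2 Ef !eq_vs.
  - by [].
exists W; exists S; split.
  split.
  - split.
    + move=> [e|f] zS /=.
        rewrite SBl in zS; have /existsP[r /andP[rr Hr]] := reach e zS.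
        apply/andP; split; rewrite inE; apply/existsP; exists r; rewrite rr //=.
        exact: connect_trans Hr (connect1 (@adj_ends _ _ allends _ _ (e0S _ zS))).
      by rewrite SBr in zS; move/Creq: zS => /andP[h1 h2]; rewrite !reqW.
    + move=> x y; rewrite !inE => /existsP[r1 /andP[r1r H1]] /existsP[r2 /andP[r2r H2]].
      apply: connect_trans (connect_trans (QBxy _ _ r1r r2r) H2).
      by rewrite adj_sym.
    + move=> [e|f] zS; apply/negP => Hc.
        by rewrite SBl in zS; exact: nbl zS Hc.
      rewrite SBr in zS.
      have fA : inr f \in (@inr E Es) @: C by apply: imset_f.
      have fB : inr f \notin (@inl E Es) @: B by apply/imsetP => -[e _ //].
      have Hac' : ~~ connect (adj allends (((@inr E Es) @: C) :\ inr f)) (vends f).1 (vends f).2.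
        by apply/negP => /adj_inr'; apply/negP; apply: Hac.
      have [z /imsetP[e0 e0B ->] Hz] := nonbridge fA fB Hac' Hc.
      exact: nbl e0B Hz.
  - by apply/subsetP => v vT; apply: reqW; rewrite inE vT.
  - move=> f; have : in1 (g f) || in2 (g f) by case: (g f); rewrite /in1 /in2 !eq_vs.
    case/orP => h; apply/orP; [left|right]; apply: reqW; [exact: req1 | exact: req2].
rewrite /vest_cost /guess_weight.
have -> : \sum_(f : Es) vw f (vstate_in vends W S f) = \sum_(f : Es) vw f (g f).
  by apply: eq_bigr => f _; rewrite Hst.
rewrite lerD2r.
rewrite big_mkcond [X in _ <= X]big_mkcond /=; apply: ler_sum => e _.
rewrite SBl; case: ifP => eB; first by rewrite (subsetP sBF _ eB).
by case: ifP.
Qed.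

End Main.

End Helpers.
Import Helpers.
Local Open Scope ring_scope.

Lemma steiner_exists (R : realFieldType) (V E : finType) (ends : E -> V * V) (w : E -> R)
    (A : {set E}) (Tm : {set V}) F0 :
  steiner_feasible ends A Tm F0 ->
  exists o, steiner_opt ends w A Tm o /\ o <= \sum_(e in F0) w e.
Proof.
pose P (F : {set E}) := (F \subset A) && [forall t1 in Tm, forall t2 in Tm, connect (adj ends F) t1 t2].
have PE F : steiner_feasible ends A Tm F <-> P F.
  split.
    move=> [sA Hc]; rewrite /P sA /=; apply/forallP => t1; apply/implyP => h1.
    by apply/forallP => t2; apply/implyP => h2; apply: Hc.
  move=> /andP[sA /forallP Hc]; split => // t1 t2 h1 h2.
  by move: (Hc t1); rewrite h1 => /forallP /(_ t2); rewrite h2.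
move=> /PE HF0.
case: (arg_minP (fun F : {set E} => \sum_(e in F) w e) HF0) => F HF Hmin.
exists (\sum_(e in F) w e); split; last exact: Hmin.
split; first by exists F; split => //; apply/PE.
by move=> y [F' [/PE HF' ->]]; apply: Hmin.
Qed.

Theorem mainTheorem3 (R : realFieldType) (V E Es : finType)
    (ends : E -> V * V) (w : E -> R) (T : {set V})
    (vends : Es -> V * V) (vw : Es -> vstate -> R) :
  (forall e, (ends e).1 != (ends e).2) ->
  (forall f, (vends f).1 != (vends f).2) ->
  (forall e, 0 <= w e) ->
  (forall f s, 0 <= vw f s) ->
  [/\ #|{ffun Es -> vstate}| = (4 ^ #|Es|)%N,
      forall g : {ffun Es -> vstate},
        (#|red_terms T vends g| <= #|T| + 2 * #|Es|)%N
    & forall x : R,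
        vest_opt ends w T vends vw x <->
        is_min (fun y => exists g : {ffun Es -> vstate},
                  guess_valid T vends g /\
                  exists o, steiner_opt (red_ends ends vends g) w
                              (red_edges ends vends g) (red_terms T vends g) o
                            /\ y = o + guess_weight vw g) x].
Proof.
move=> _ _ w0 vw0; split; [exact: part1 | exact: part2 |].
set P2 := (fun y => _).
pose P1 := (fun y => exists W S, vest_feasible ends T vends W S /\ y = vest_cost w vends vw W S).
have HA y1 : P1 y1 -> exists2 y2, P2 y2 & y2 <= y1.
  move=> [W [S [HWS ->]]].
  have [g [Hg [F [HF Hc]]]] := factA w vw HWS.
  have [o [Ho Hle]] := @steiner_exists _ _ _ _ w _ _ _ HF.
  exists (o + guess_weight vw g); first by exists g; split => //; exists o.
  by rewrite -Hc lerD2r.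
have HB y2 : P2 y2 -> exists2 y1, P1 y1 & y1 <= y2.
  move=> [g [Hg [o [[[F [HF ->]] _] ->]]]].
  have [W [S [HWS Hc]]] := factB vw w0 Hg HF.
  by exists (vest_cost w vends vw W S) => //; exists W, S.
move=> x; split.
  move=> [Hx Hmin]; have [y2 Py2 Hy2] := HA x Hx.
  have [y1 Py1 Hy1] := HB y2 Py2.
  have Exy : x = y2 by apply/eqP; rewrite eq_le Hy2 (le_trans (Hmin _ Py1) Hy1).
  split; first by rewrite Exy.
  move=> y Py; have [y1' Py1' Hy1'] := HB y Py; exact: le_trans (Hmin _ Py1') Hy1'.
move=> [Hx Hmin]; have [y1 Py1 Hy1] := HB x Hx.
have [y2 Py2 Hy2] := HA y1 Py1.
have Exy : x = y1 by apply/eqP; rewrite eq_le Hy1 (le_trans (Hmin _ Py2) Hy2).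
split; first by rewrite Exy.
move=> y Py; have [y2' Py2' Hy2'] := HA y Py; exact: le_trans (Hmin _ Py2') Hy2'.
Qed.
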